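(* The Petersen graph is $4$-ordered.
   Context: A simple graph $G$ is called $k$-ordered if for every sequence $v_1,\ldots,v_k$ of $k$ distinct vertices of $G$ there exists a cycle in $G$ containing these $k$ vertices in the specified (cyclic) order. The Petersen graph is the $3$-regular graph on $10$ vertices consisting of an outer $5$-cycle $B_1B_2B_3B_4B_5$, an inner ''pentagram'' on $A_1,\ldots,A_5$ with $A_i$ adjacent to $A_{i\pm 2 \bmod 5}$, and the edges $A_iB_i$ for $i=1,\ldots,5$. *)

(* Defs.v *)
From mathcomp Require Import all_boot.
Set Implicit Arguments. Unset Strict Implicit. Unset Printing Implicit Defensive.

(* A simple graph is a symmetric irreflexive relation e : rel T on a finType T. *)

Definition is_graph_cycle (T : finType) (e : rel T) (c : seq T) : bool :=
  [&& uniq c, 2 < size c & cycle e c].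

Definition in_cyclic_order (T : finType) (s c : seq T) : Prop :=
  exists n, subseq s (rot n c).

Definition k_ordered (T : finType) (e : rel T) (k : nat) : Prop :=
  forall s : seq T, size s = k -> uniq s ->
    exists c : seq T, is_graph_cycle e c /\ in_cyclic_order s c.

(* Petersen graph on 'I_10: vertex i (i < 5) is A_{i+1}, vertex 5 + i is B_{i+1}.
   Outer 5-cycle B_i ~ B_{i+-1}; inner pentagram A_i ~ A_{i+-2}; spokes A_i ~ B_i. *)
Definition petersen_nat_adj (a b : nat) : bool :=
  if (a < 5) && (b < 5) then ((a + 2) %% 5 == b) || ((b + 2) %% 5 == a)
  else if (5 <= a) && (5 <= b) then
    ((a - 5 + 1) %% 5 == b - 5) || ((b - 5 + 1) %% 5 == a - 5)
  else (a + 5 == b) || (b + 5 == a).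

Definition petersen_adj (x y : 'I_10) : bool := petersen_nat_adj (val x) (val y).

(* Main.v *)
Require Import Defs.
From mathcomp Require Import all_boot.

Definition natcycles : seq (seq nat) := [:: [:: 0; 5; 6; 1; 3; 8; 9; 4; 2]; [:: 0; 2; 4; 9; 8; 3; 1; 6; 5]; [:: 0; 3; 1; 4; 2; 7; 8; 9; 5]; [:: 0; 5; 9; 8; 7; 2; 4; 1; 3]; [:: 0; 2; 4; 9; 5; 6; 7; 8; 3]; [:: 0; 3; 8; 7; 6; 5; 9; 4; 2]; [:: 0; 3; 8; 9; 4; 1; 6; 7; 2]; [:: 0; 2; 7; 6; 1; 4; 9; 8; 3]; [:: 0; 5; 9; 4; 1; 3; 8; 7; 2]; [:: 0; 2; 7; 8; 3; 1; 4; 9; 5]; [:: 0; 2; 7; 8; 9; 5; 6; 1; 3]; [:: 0; 3; 1; 6; 5; 9; 8; 7; 2]; [:: 0; 5; 9; 4; 2; 7; 6; 1; 3]; [:: 1; 3; 8; 9; 5; 6; 7; 2; 4]; [:: 0; 3; 1; 6; 7; 2; 4; 9; 5]; [:: 1; 4; 2; 7; 6; 5; 9; 8; 3]; [:: 0; 5; 6; 7; 8; 9; 4; 1; 3]; [:: 0; 2; 4; 1; 6; 7; 8; 9; 5]; [:: 0; 5; 6; 1; 4; 2; 7; 8; 3]; [:: 0; 5; 9; 8; 7; 6; 1; 4; 2]; [:: 0; 3; 1; 4; 9; 8; 7; 6; 5]; [:: 0; 3; 8; 7; 2; 4; 1; 6; 5]; [:: 0; 2; 7; 8; 9; 4; 1;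 6; 5]; [:: 0; 5; 6; 7; 8; 3; 1; 4; 2]; [:: 0; 2; 7; 6; 1; 3; 8; 9; 5]; [:: 0; 5; 9; 4; 1; 6; 7; 8; 3]; [:: 0; 5; 6; 1; 4; 9; 8; 7; 2]; [:: 0; 3; 8; 9; 5; 6; 1; 4; 2]; [:: 0; 2; 4; 9; 8; 7; 6; 1; 3]; [:: 0; 2; 7; 6; 5; 9; 4; 1; 3]; [:: 1; 6; 5; 9; 4; 2; 7; 8; 3]; [:: 0; 5; 9; 8; 3; 1; 6; 7; 2]; [:: 0; 3; 8; 7; 6; 1; 4; 9; 5]; [:: 0; 3; 8; 9; 4; 2; 7; 6; 5]; [:: 0; 5; 6; 7; 2; 4; 9; 8; 3]; [:: 0; 3; 1; 6; 7; 8; 9; 4; 2]; [:: 0; 2; 4; 1; 3; 8; 7; 6; 5]; [:: 0; 3; 1; 4; 9; 5; 6; 7; 2]; [:: 0; 2; 4; 1; 6; 5; 9; 8; 3]; [:: 1; 3; 8; 7; 2; 4; 9; 5; 6]; [:: 0; 3; 1; 6; 7; 8; 9; 5]; [:: 0; 2; 4; 9; 8; 7; 6; 5]; [:: 0; 5; 6; 1; 3; 8; 7; 2]; [:: 1; 4; 9; 5; 6; 7; 8; 3]; [:: 1; 6; 7; 2; 4; 9; 8; 3]; [:: 0; 3; 8; 7; 6; 1; 4; 2]; [:: 0; 3; 1; 6; 5; 9; 4; 2]; [:: 0; 2; 7; 8; 9; 4; 1; 3]; [:: 0; 2; 4; 9; 5; 6; 1; 3]; [:: 0; 2; 7; 6;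 1; 4; 9; 5]; [:: 0; 2; 7; 8; 3; 1; 6; 5]; [:: 0; 3; 1; 4; 2; 7; 6; 5]; [:: 0; 5; 6; 7; 8; 9; 4; 2]; [:: 0; 3; 8; 7; 2; 4; 9; 5]; [:: 0; 2; 7; 6; 5; 9; 8; 3]; [:: 1; 3; 8; 7; 6; 5; 9; 4]; [:: 0; 3; 1; 4; 9; 8; 7; 2]; [:: 0; 5; 9; 4; 2; 7; 8; 3]; [:: 0; 5; 6; 7; 2; 4; 1; 3]; [:: 0; 5; 9; 8; 3; 1; 4; 2]; [:: 0; 5; 9; 4; 1; 6; 7; 2]; [:: 1; 4; 2; 7; 8; 9; 5; 6]; [:: 0; 2; 4; 1; 6; 7; 8; 3]; [:: 0; 3; 8; 9; 4; 1; 6; 5]; [:: 0; 2; 4; 1; 3; 8; 9; 5]; [:: 0; 3; 8; 9; 5; 6; 7; 2]; [:: 1; 3; 8; 9; 4; 2; 7; 6]; [:: 0; 5; 9; 8; 7; 6; 1; 3]; [:: 0; 5; 6; 1; 4; 9; 8; 3]; [:: 1; 6; 5; 9; 8; 7; 2; 4]].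

Definition ords : seq 'I_10 := [:: @Ordinal 10 0 isT; @Ordinal 10 1 isT; @Ordinal 10 2 isT;
  @Ordinal 10 3 isT; @Ordinal 10 4 isT; @Ordinal 10 5 isT; @Ordinal 10 6 isT;
  @Ordinal 10 7 isT; @Ordinal 10 8 isT; @Ordinal 10 9 isT].

Definition toI (k : nat) : 'I_10 := nth ord0 ords k.

Lemma toI_val_all : all (fun k => val (toI k) == k) (iota 0 10).
Proof. by vm_compute. Qed.

Lemma cycles_ok : all (fun c => is_graph_cycle petersen_adj (map toI c) && all (fun k => k < 10) c) natcycles.
Proof. by vm_compute. Qed.

Definition good (s : seq nat) : bool :=
  has (fun c => has (fun n => subseq s (rot n c)) (iota 0 (size c))) natcycles.

Lemma all_good : all (fun a => all (fun b => all (fun c => all (fun d =>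
   (uniq [:: a; b; c; d]) ==> good [:: a; b; c; d]) (iota 0 10)) (iota 0 10)) (iota 0 10)) (iota 0 10).
Proof. vm_compute. reflexivity. Qed.

Lemma subseq_val (s c : seq 'I_10) : subseq (map val s) (map val c) -> subseq s c.
Proof.
case/subseqP=> m Hsz Hm; apply/subseqP; exists m; first by rewrite size_map in Hsz.
by apply: (inj_map val_inj); rewrite Hm map_mask.
Qed.

Lemma memI (x : 'I_10) : val x \in iota 0 10.
Proof. by rewrite mem_iota /= ltn_ord. Qed.

Theorem theorem2p5 : k_ordered petersen_adj 4.
Proof.
move=> s Hs Hu.
case: s Hs Hu => [|a [|b [|c [|d [|? ?]]]]] //= _ Hu.
have Hu' : uniq (map val [:: a; b; c; d]).
  by rewrite (map_inj_uniq val_inj).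
have /allP/(_ _ (memI a))/allP/(_ _ (memI b))/allP/(_ _ (memI c))
  /allP/(_ _ (memI d))/implyP/(_ Hu') := all_good.
case/hasP=> nc Hnc /hasP[n _ Hn].
have /andP[Hcy Hlt] := allP cycles_ok nc Hnc.
exists (map toI nc); split=> //; exists n.
apply: subseq_val; rewrite map_rot -map_comp.
have -> : [seq (val \o toI) i | i <- nc] = nc.
  rewrite -[RHS]map_id; apply/eq_in_map => k Hk /=.
  have Hk10 : k \in iota 0 10 by rewrite mem_iota /=; exact: (allP Hlt).
  exact/eqP/(allP toI_val_all).
exact: Hn.
Qed.
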